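(* Let $(S^\Omega,\mathcal T)$ be a resource theory with a currency $\mathcal C$ (value function $\mathrm{Val}$) independent of its target $\mathcal S$, and assume $\mathcal C$ is good for the poor. Let $V,W\in\mathcal S$ and $C_1,C_1'\in\mathcal C$ with $\mathrm{Val}(C_1)\ge\mathrm{Val}(C_1')$, and suppose that for every $C_2\in\mathcal C$ with $V\cap C_1\to W\cap C_2$ one has $\mathrm{Val}(C_1')\ge\mathrm{Val}(C_1)-\mathrm{Val}(C_2)$. Then $$\mathrm{Balance}(V\to W\mid C_1)\le \mathrm{Balance}(V\to W\mid C_1').$$
   Context: A resource theory $(S^\Omega,\mathcal T)$ consists of a set $\Omega$, the specification space $S^\Omega$ of all non-empty subsets of $\Omega$ (resources), and a set $\mathcal T$ of maps $f:S^\Omega\to S^\Omega$ acting element-wise, $f(V)=\bigcup_{\nu\in V} f(\{\nu\})$. $V\to W$ iff some $f\in\mathcal T$ has $f(V)\subseteq W$; $\to$ is assumed to be a pre-order. $\mathcal C\subseteq S^\Omega$ is a currency for target $\mathcal S\subseteq S^\Omega$ if (Order) any two elements of $\mathcal C$ are comparable under $\to$ and $\Omega\in\mathcal C$; (Universality) $\Omega\in\mathcal S$ and every $V\in\mathcal S$ has $C,C'\in\mathcal C$ with $C\to V$, $V\to C'$. A value function $\mathrm{Val}:\mathcal C\to\mathbb R_{\ge0}$ satisfies $\mathrm{Val}(C')\ge\mathrm{Val}(C)\iff C'\to C$ and $\mathrm{Val}(\Omega)=0$; $c_{\sup}=\sup_{C\in\mathcal C}\mathrm{Val}(C)$ (possibly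 $\infty$). Independence: $C\cap V\ne\emptyset$ for all $C\in\mathcal C,V\in\mathcal S$, and $C\to C'$ implies $C\cap V\to C'\cap V$ for all $V\in\mathcal S$. Balance: $\mathrm{Balance}(V\to W\mid C)=\sup\{\mathrm{Val}(C')-\mathrm{Val}(C): C'\in\mathcal C,\ V\cap C\to W\cap C'\}$ (with $\sup\emptyset=-\infty$). Fairness conditions: for $V,W\in\mathcal S$ and $C_1,C_2\in\mathcal C$ with $V\cap C_1\to W\cap C_2$, let $\Delta=\mathrm{Val}(C_2)-\mathrm{Val}(C_1)$. (F1): for a given $C_1'\in\mathcal C$ with $-\Delta\le\mathrm{Val}(C_1')<c_{\sup}-\Delta$ there is $C_2'\in\mathcal C$ with $V\cap C_1'\to W\cap C_2'$ and $\mathrm{Val}(C_2')-\mathrm{Val}(C_1')=\Delta$. (F2): for a given $C_2'\in\mathcal C$ with $\Delta\le\mathrm{Val}(C_2')$ there is $C_1'\in\mathcal C$ with $V\cap C_1'\to W\cap C_2'$ and $\mathrm{Val}(C_2')-\mathrm{Val}(C_1')=\Delta$. The currency is good for the poor if, for all such data, (F1) holds for every admissible $C_1'$ with $\mathrm{Val}(C_1')\le\mathrm{Val}(C_1)$ and (F2) holds for every admissible $C_2'$ with $\mathrm{Val}(C_2')\le\mathrm{Val}(C_2)$. *)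

(* Defs.v *)
From Stdlib Require Import Reals.
Open Scope R_scope.

(* Extended reals, used for suprema that may be +oo (c_sup) or -oo (sup of empty set). *)
Inductive ereal : Type := Fin (r : R) | PInf | NInf.

Definition ele (x y : ereal) : Prop :=
  match x, y with
  | NInf, _ => True
  | _, PInf => True
  | Fin a, Fin b => a <= b
  | _, _ => False
  end.

Definition elt (x y : ereal) : Prop := ele x y /\ x <> y.

Definition is_esup (A : R -> Prop) (s : ereal) : Prop :=
  (forall a, A a -> ele (Fin a) s) /\
  (forall u, (forall a, A a -> ele (Fin a) u) -> ele s u).

(* Resources: subsets of Omega (predicates); non-emptiness stated explicitly. *)
Definition res (Om : Type) := Om -> Prop.
Definition nonempty {Om} (V : res Om) : Prop := exists x, V x.
Definition full {Om} : res Om := fun _ => True.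
Definition inter {Om} (V W : res Om) : res Om := fun x => V x /\ W x.
Definition subset {Om} (V W : res Om) : Prop := forall x, V x -> W x.

(* A transformation f : S^Om -> S^Om acting element-wise is determined by its
   values g nu = f({nu}); then f(V) = union_{nu in V} g nu.
   The set of transformations T is a predicate on such g. *)
Definition trans (Om : Type) := Om -> res Om.

Definition arrow {Om} (T : trans Om -> Prop) (V W : res Om) : Prop :=
  exists g, T g /\ forall nu, V nu -> subset (g nu) W.

(* (S^Om, T) is a resource theory: maps send S^Om to S^Om (g nu non-empty)
   and -> is a pre-order on S^Om. *)
Definition resource_theory {Om} (T : trans Om -> Prop) : Prop :=
  (forall g, T g -> forall nu, nonempty (g nu)) /\
  (forall V, nonempty V -> arrow T V V) /\
  (forall U V W, nonempty U -> nonempty V -> nonempty W ->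
     arrow T U V -> arrow T V W -> arrow T U W).

Definition currency {Om} (T : trans Om -> Prop) (Cset S : res Om -> Prop) : Prop :=
  (forall C, Cset C -> nonempty C) /\ (forall V, S V -> nonempty V) /\
  (forall C C', Cset C -> Cset C' -> arrow T C C' \/ arrow T C' C) /\
  Cset full /\
  S full /\
  (forall V, S V -> exists C C', Cset C /\ Cset C' /\ arrow T C V /\ arrow T V C').

Definition value_function {Om} (T : trans Om -> Prop) (Cset : res Om -> Prop)
  (Val : res Om -> R) : Prop :=
  (forall C, Cset C -> 0 <= Val C) /\
  (forall C C', Cset C -> Cset C' -> (Val C' >= Val C <-> arrow T C' C)) /\
  Val full = 0.

Definition is_csup {Om} (Cset : res Om -> Prop) (Val : res Om -> R) (cs : ereal) : Prop :=
  is_esup (fun x => exists C, Cset C /\ x = Val C) cs.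

Definition independent {Om} (T : trans Om -> Prop) (Cset S : res Om -> Prop) : Prop :=
  (forall C V, Cset C -> S V -> nonempty (inter C V)) /\
  (forall C C' V, Cset C -> Cset C' -> S V -> arrow T C C' ->
     arrow T (inter C V) (inter C' V)).

Definition is_balance {Om} (T : trans Om -> Prop) (Cset : res Om -> Prop)
  (Val : res Om -> R) (V W C : res Om) (b : ereal) : Prop :=
  is_esup (fun x => exists C', Cset C' /\ arrow T (inter V C) (inter W C') /\
                              x = Val C' - Val C) b.

Definition good_for_poor {Om} (T : trans Om -> Prop) (Cset S : res Om -> Prop)
  (Val : res Om -> R) : Prop :=
  forall V W C1 C2, S V -> S W -> Cset C1 -> Cset C2 ->
    arrow T (inter V C1) (inter W C2) ->
    let D := Val C2 - Val C1 in
    (forall C1' cs, Cset C1' -> is_csup Cset Val cs ->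
       - D <= Val C1' -> elt (Fin (Val C1' + D)) cs -> Val C1' <= Val C1 ->
       exists C2', Cset C2' /\ arrow T (inter V C1') (inter W C2') /\
                   Val C2' - Val C1' = D) /\
    (forall C2', Cset C2' -> D <= Val C2' -> Val C2' <= Val C2 ->
       exists C1', Cset C1' /\ arrow T (inter V C1') (inter W C2') /\
                   Val C2' - Val C1' = D).

(* Main.v *)
Require Import Defs.
From Stdlib Require Import Reals Lra Classical.
Open Scope R_scope.

Lemma csup_exists {Om} (Cset : res Om -> Prop) (Val : res Om -> R) :
  Cset full -> exists cs, is_csup Cset Val cs.
Proof.
  intros Hf. set (E := fun x => exists C, Cset C /\ x = Val C).
  destruct (classic (bound E)) as [Hb|Hnb].
  - destruct (completeness E Hb) as [m [Hm1 Hm2]].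
    { exists (Val full). exists full; auto. }
    exists (Fin m). split.
    + intros a Ha. simpl. apply Hm1. exact Ha.
    + intros u Hu. destruct u as [r| |]; simpl.
      * apply Hm2. intros x Hx. specialize (Hu x Hx). simpl in Hu. exact Hu.
      * exact I.
      * specialize (Hu (Val full) (ex_intro _ full (conj Hf eq_refl))). simpl in Hu. exact Hu.
  - exists PInf. split.
    + intros a _. simpl. auto.
    + intros u Hu. destruct u as [r| |]; simpl.
      * apply Hnb. exists r. intros x Hx. specialize (Hu x Hx). simpl in Hu. exact Hu.
      * exact I.
      * exfalso. apply Hnb. exists 0. intros x Hx. specialize (Hu x Hx). simpl in Hu. exact (False_ind _ Hu).
Qed.

Theorem mainTheorem7 (Om : Type) (T : trans Om -> Prop) (Cset S : res Om -> Prop)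
  (Val : res Om -> R)
  (HT : resource_theory T) (HC : currency T Cset S) (HVal : value_function T Cset Val)
  (Hind : independent T Cset S) (Hpoor : good_for_poor T Cset S Val)
  (V W C1 C1' : res Om) (HV : S V) (HW : S W) (HC1 : Cset C1) (HC1' : Cset C1')
  (Hle : Val C1 >= Val C1')
  (Hcond : forall C2, Cset C2 -> arrow T (inter V C1) (inter W C2) ->
             Val C1' >= Val C1 - Val C2)
  (b b' : ereal)
  (Hb : is_balance T Cset Val V W C1 b) (Hb' : is_balance T Cset Val V W C1' b') :
  ele b b'.
Proof.
  destruct Hb as [_ Hb2]. apply Hb2.
  intros a [C2 [HC2 [Harr Ha]]]. destruct Hb' as [Hb'1 _].
  destruct HT as [_ [_ Htr]].
  destruct HC as [HCne [HSne [_ [Hfull _]]]].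
  destruct HVal as [Hpos [Hiff _]].
  destruct Hind as [Hind1 Hind2].
  destruct (Req_dec (Val C1) (Val C1')) as [Heq|Hneq].
  - apply Hb'1. exists C2. split; [exact HC2|]. split; [|lra].
    assert (Ha1 : arrow T C1' C1) by (apply Hiff; auto; lra).
    destruct (Hind2 C1' C1 V HC1' HC1 HV Ha1) as [g [Hg Hgs]].
    assert (H1 : arrow T (inter C1' V) (inter V C1)).
    { exists g. split; auto. intros nu Hnu x Hx. destruct (Hgs nu Hnu x Hx). split; auto. }
    assert (H2 : arrow T (inter C1' V) (inter W C2)).
    { apply Htr with (inter V C1); [apply Hind1; auto | | | exact H1 | exact Harr].
      - destruct (Hind1 C1 V HC1 HV) as [x [? ?]]. exists x. split; auto.
      - destruct (Hind1 C2 W HC2 HW) as [x [? ?]]. exists x. split; auto. }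
    destruct H2 as [h [Hh Hhs]]. exists h. split; auto.
    intros nu [? ?]. apply Hhs. split; auto.
  - destruct (csup_exists Cset Val Hfull) as [cs Hcs].
    destruct (Hpoor V W C1 C2 HV HW HC1 HC2 Harr) as [F1 _].
    assert (Hc := Hcond C2 HC2 Harr).
    assert (Hlt : Val C1' < Val C1) by (destruct (Rle_lt_or_eq_dec _ _ (Rge_le _ _ Hle)); [assumption|congruence]).
    destruct (F1 C1' cs HC1' Hcs) as [C2' [HC2' [Harr' HD]]]; try lra.
    + destruct Hcs as [Hcs1 _].
      assert (Hv := Hcs1 (Val C2) (ex_intro _ C2 (conj HC2 eq_refl))).
      destruct cs as [m| |]; simpl in Hv |- *.
      * split; [simpl; lra|]. intro Heq2; injection Heq2; lra.
      * split; [exact I|discriminate].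
      * destruct Hv.
    + apply Hb'1. exists C2'. split; auto. split; auto. lra.
Qed.
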